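(* Let $\Gamma=(V,E)$ be a simple connected graph of order $n$ and maximum degree $\Delta$, and let $\mu$ be the algebraic connectivity of $\Gamma$. Then the strong defensive alliance number of $\Gamma$ satisfies $$\hat{a}(\Gamma)\ge \left\lceil\frac{n\left(\mu-\left\lfloor\frac{\Delta}{2}\right\rfloor\right)}{\mu}\right\rceil.$$
   Context: For $S\subseteq V$ and $v\in V$, $N_S(v)=\{u\in S: u\sim v\}$ and $N_{V\setminus S}(v)=\{u\in V\setminus S: u\sim v\}$. A nonempty set $S\subseteq V$ is a strong defensive alliance if $|N_S(v)|\ge |N_{V\setminus S}(v)|$ for every $v\in S$. $\hat a(\Gamma)$ is the minimum cardinality of a strong defensive alliance in $\Gamma$. The algebraic connectivity is the second smallest eigenvalue of the Laplacian matrix of $\Gamma$. *)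

(* Defs.v *)
From HB Require Import structures.
From mathcomp Require Import all_boot all_order all_algebra.
From mathcomp Require Import reals.
Set Implicit Arguments. Unset Strict Implicit. Unset Printing Implicit Defensive.
Import Order.TTheory GRing.Theory Num.Theory.
Local Open Scope ring_scope.

Definition simple_graph (T : finType) (e : rel T) : Prop :=
  symmetric e /\ irreflexive e.

Definition connected_graph (T : finType) (e : rel T) : Prop :=
  forall x y : T, connect e x y.

Definition nbhd_in (T : finType) (e : rel T) (S : {set T}) (v : T) : {set T} :=
  [set u in S | e u v].

Definition deg (T : finType) (e : rel T) (v : T) : nat := #|[set u | e u v]|.

Definition max_deg (T : finType) (e : rel T) : nat := (\max_(v : T) deg e v)%N.

Definition strong_def_alliance (T : finType) (e : rel T) (S : {set T}) : bool :=
  (S != set0) &&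
  [forall v in S, (#|nbhd_in e (~: S) v| <= #|nbhd_in e S v|)%N].

(* minimum cardinality of a strong defensive alliance (V itself is one
   whenever V is nonempty, so the default #|T| is never strictly below the min) *)
Definition alliance_number (T : finType) (e : rel T) : nat :=
  (\big[minn/#|T|]_(S : {set T} | strong_def_alliance e S) #|S|)%N.

Definition laplacian (R : nzRingType) (T : finType) (e : rel T) : 'M[R]_#|T| :=
  \matrix_(i, j) (if i == j then (deg e (enum_val i))%:R
                  else if e (enum_val i) (enum_val j) then -1 else 0).

Definition laplacian_spectrum (R : realType) (T : finType) (e : rel T)
  (s : seq R) : Prop :=
  sorted <=%R s /\
  char_poly (laplacian R e) = \prod_(x <- s) ('X - x%:P).

(* algebraic connectivity = second smallest Laplacian eigenvalue *)
Definition alg_connectivity (R : realType) (s : seq R) : R := s`_1.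

(* Main.v *)
Require Import Defs.
From HB Require Import structures.
From mathcomp Require Import all_boot all_order all_algebra.
From mathcomp Require Import reals.
From mathcomp Require Import ring lra.
From mathcomp Require Import complex.
Import Order.TTheory GRing.Theory Num.Theory.
Local Open Scope ring_scope.
Local Open Scope sesquilinear_scope.

Lemma char_poly_conj (F : fieldType) n (P B : 'M[F]_n) : P \in unitmx ->
  char_poly (invmx P *m B *m P) = char_poly B.
Proof.
move=> PU; rewrite /char_poly /char_poly_mx.
have -> : 'X%:M - map_mx polyC (invmx P *m B *m P) =
   map_mx polyC (invmx P) *m ('X%:M - map_mx polyC B) *m map_mx polyC P.
  rewrite mulmxBr mulmxBl !map_mxM; congr (_ - _).
  rewrite mul_mx_scalar -scalemxAl -map_mxM mulVmx // map_mx1.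
  by rewrite scalemx1.
rewrite !det_mulmx !det_map_mx mulrC mulrA -rmorphM -det_mulmx mulmxV //.
by rewrite det1 rmorph1 mul1r.
Qed.

Lemma card_count (T : finType) (p : pred T) : #|p| = count p (enum T).
Proof. by rewrite enumT cardE /enum_mem size_filter. Qed.

Lemma trC_mul (C : numClosedFieldType) m n p (X : 'M[C]_(m, n)) (Y : 'M[C]_(n, p)) :
  (X *m Y)^t* = Y^t* *m X^t*.
Proof. by rewrite trmx_mul map_mxM. Qed.

Lemma key (C : numClosedFieldType) n (A : 'M[C]_n) (s : seq C) (mu : C)
  (x : 'rV[C]_n) :
  A \is hermsymmx ->
  char_poly A = \prod_(y <- s) ('X - y%:P) ->
  (count (fun y => ~~ (mu <= y)%R) s <= 1)%N ->
  0 < mu ->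
  A *m (const_mx 1 : 'cV[C]_n) = 0 ->
  (const_mx 1 : 'rV[C]_n) *m A = 0 ->
  x *m (const_mx 1 : 'cV[C]_n) = 0 ->
  mu * (x *m x^t*) 0 0 <= (x *m A *m x^t*) 0 0.
Proof.
move=> HA Hs Hc mu0 A1 oA x1.
set P := spectralmx A; set D := spectral_diag A.
have PU : P \is unitarymx := spectral_unitarymx A.
have AE : A = P^t* *m diag_mx D *m P.
  by rewrite -invmx_unitary //; apply/orthomx_spectralP/hermitian_normalmx.
have PtP : P^t* *m P = 1%:M by rewrite -invmx_unitary // mulVmx // unitarymx_unit.
have cp : char_poly A = \prod_(i < n) ('X - (D 0 i)%:P).
  rewrite AE -invmx_unitary // char_poly_conj ?unitarymx_unit //.
  by rewrite char_poly_trig ?diag_mx_is_trig //; apply: eq_bigr => i _; rewrite mxE eqxx mulr1n.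
have pe : perm_eq s [seq D 0 i | i <- enum 'I_n].
  by apply: prod_XsubC_eq; rewrite -Hs cp big_map big_enum.
have cnt : (#|[pred i : 'I_n | ~~ (mu <= D 0 i)%R]| <= 1)%N.
  rewrite card_count; have -> : count [pred i : 'I_n | ~~ (mu <= D 0 i)%R] (enum 'I_n) =
    count (fun y => ~~ (mu <= y)%R) [seq D 0 i | i <- enum 'I_n].
    by rewrite [RHS]count_map.
  by rewrite -(permP pe).
pose w (z : 'rV[C]_n) := z *m P^t*.
have QA : forall z, (z *m A *m z^t*) 0 0 = \sum_i D 0 i * (w z 0 i * (w z 0 i)^*).
  move=> z; have -> : z *m A *m z^t* = (z *m P^t*) *m diag_mx D *m (z *m P^t*)^t*.
    by rewrite trC_mul trmxCK AE !mulmxA.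
  rewrite mxE; apply: eq_bigr => i _; rewrite mul_mx_diag !mxE.
  by rewrite -mulrA mulrCA.
have QI : forall z, (z *m z^t*) 0 0 = \sum_i (w z 0 i * (w z 0 i)^*).
  move=> z; have -> : z *m z^t* = (z *m P^t*) *m (z *m P^t*)^t*.
    by rewrite trC_mul trmxCK mulmxA -(mulmxA z) PtP mulmx1.
  by rewrite mxE; apply: eq_bigr => i _; rewrite !mxE.
have G : forall z, (forall i, (mu <= D 0 i) || (w z 0 i == 0)) ->
    mu * (z *m z^t*) 0 0 <= (z *m A *m z^t*) 0 0.
  move=> z Hz; rewrite QA QI mulr_sumr; apply: ler_sum => i _.
  case/orP: (Hz i) => [Hi|/eqP->]; last by rewrite mul0r !mulr0.
  by apply: ler_wpM2r => //; apply: mul_conjC_ge0.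
have E00 : forall p q (M N : 'M[C]_(p, q)) i j, (M + N) i j = M i j + N i j by move=> *; rewrite mxE.
have EB00 : forall p q (M N : 'M[C]_(p, q)) i j, (M - N) i j = M i j - N i j by move=> *; rewrite !mxE.
have EZ00 : forall p q c (M : 'M[C]_(p, q)) i j, (c *: M) i j = c * M i j by move=> *; rewrite mxE.
have o1 : (const_mx 1 : 'rV[C]_n) = (const_mx 1 : 'cV[C]_n)^t*.
  by apply/matrixP => i j; rewrite !mxE conjC1.
have r1x : (const_mx 1 : 'rV[C]_n) *m x^t* = 0.
  by rewrite o1 -trC_mul x1 trmx0 map_mx0.
case: (pickP [pred i : 'I_n | ~~ (mu <= D 0 i)%R]) => [i0 Hi0 | Hnone]; last first.
  by apply: G => i; have := Hnone i; rewrite /= => /negbFE ->.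
have Hoth : forall i, i != i0 -> mu <= D 0 i.
  move=> i Hi; apply/negPn/negP => Hb.
  by move/card_le1_eqP: cnt => /(_ i i0 Hb Hi0) Eq; rewrite Eq eqxx in Hi.
set c := w (const_mx 1) 0 i0.
have n0 : (0 < n)%N by case: n i0 {A HA Hs cp pe cnt x x1 A1 oA P D PU AE PtP w QA QI G E00 EB00 EZ00 o1 r1x Hi0 Hoth c} => [[]|].
have ones2 : ((const_mx 1 : 'rV[C]_n) *m (const_mx 1 : 'rV[C]_n)^t*) 0 0 = n%:R.
  rewrite mxE; under eq_bigr do rewrite !mxE conjC1 mulr1.
  by rewrite sumr_const card_ord.
have ones2c : ((const_mx 1 : 'rV[C]_n) *m (const_mx 1 : 'cV[C]_n)) 0 0 = n%:R.
  rewrite mxE; under eq_bigr do rewrite !mxE mulr1.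
  by rewrite sumr_const card_ord.
case: (eqVneq c 0) => c0.
  have Hg : forall i, (mu <= D 0 i) || (w (const_mx 1) 0 i == 0).
    by move=> i; case: (eqVneq i i0) => [->|/Hoth ->//]; move: c0; rewrite /c => ->; rewrite eqxx orbT.
  have := G _ Hg; rewrite ones2 oA mul0mx mxE => H.
  have : 0 < mu * n%:R by rewrite mulr_gt0 // ltr0n.
  by move=> /lt_le_trans /(_ H); rewrite ltxx.
set a := w x 0 i0 / c.
set z := x - a *: (const_mx 1 : 'rV[C]_n).
have wz : w z 0 i0 = 0.
  rewrite /w /z mulmxBl -scalemxAl EB00 EZ00 -/c /a divfK //.
  by rewrite subrr.
have Hg : forall i, (mu <= D 0 i) || (w z 0 i == 0).
  by move=> i; case: (eqVneq i i0) => [->|/Hoth ->//]; rewrite wz eqxx orbT.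
have zt : z^t* = x^t* - a^* *: (const_mx 1 : 'cV[C]_n).
  by apply/matrixP => i j; rewrite !mxE !mulr1 rmorphB.
have zA : z *m A *m z^t* = x *m A *m x^t*.
  rewrite zt /z mulmxBl -scalemxAl oA scaler0 subr0.
  by rewrite mulmxBr -scalemxAr -(mulmxA x A (const_mx 1)) A1 mulmx0 scaler0 subr0.
have zz : (z *m z^t*) 0 0 = (x *m x^t*) 0 0 + a * a^* * n%:R.
  rewrite zt /z mulmxBl !mulmxBr -!scalemxAl -!scalemxAr x1 r1x.
  rewrite !scaler0 !subr0 sub0r opprK E00 !EZ00 ones2c.
  by rewrite mulrA.
have := G z Hg; rewrite zA zz => H.
apply: le_trans H; apply: ler_wpM2l; first exact: ltW.
by rewrite lerDl mulr_ge0 ?ler0n ?mul_conjC_ge0.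
Qed.

Lemma sum_ordT (V : nmodType) (T : finType) (F : 'I_#|T| -> V) :
  \sum_i F i = \sum_t F (enum_rank t).
Proof. by rewrite (reindex enum_rank) //; apply: onW_bij; exact: enum_rank_bij. Qed.

Lemma card_ind (T : finType) (P : pred T) : #|[set u | P u]| = (\sum_u (P u : nat))%N.
Proof.
rewrite -sum1_card big_mkcond /=; apply: eq_bigr => u _; rewrite inE.
by case: (P u).
Qed.

Lemma swap_sum (V : nmodType) (T : finType) (e : rel T) (G : T -> T -> V) :
  symmetric e ->
  \sum_v \sum_(u | e v u) G v u = \sum_v \sum_(u | e v u) G u v.
Proof.
move=> sym; rewrite (exchange_big_dep predT) //=.
by apply: eq_bigr => v _; apply: eq_bigl => u; rewrite sym.
Qed.

Lemma lap_row (R : nzRingType) (T : finType) (e : rel T) (i : 'I_#|T|) (h : 'I_#|T| -> R) :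
  simple_graph e ->
  \sum_j laplacian R e i j * h j =
  \sum_(u | e (enum_val i) u) (h i - h (enum_rank u)).
Proof.
move=> [sym irr]; rewrite sum_ordT.
rewrite (bigD1 (enum_val i)) //= enum_valK.
rewrite !mxE eqxx sumrB.
have -> : (deg e (enum_val i))%:R * h i = \sum_(u | e (enum_val i) u) h i.
  rewrite sumr_const /deg mulr_natl; congr (_ *+ _).
  by apply: eq_card => u; rewrite !inE sym.
congr (_ + _); rewrite -sumrN (bigID (fun u => e (enum_val i) u)) /=.
rewrite [X in _ + X]big1 ?addr0; last first.
  move=> u /andP[uv /negbTE eu]; rewrite !mxE enum_rankK eu.
  have -> : (i == enum_rank u) = false.
    by apply/negbTE; apply: contra uv => /eqP ->; rewrite enum_rankK.
  by rewrite mul0r.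
rewrite (eq_bigl (fun u => e (enum_val i) u)) => [|u]; last first.
  by case: (eqVneq u (enum_val i)) => [->|//]; rewrite irr andbF.
apply: eq_bigr => u eu; rewrite !mxE enum_rankK eu.
have -> : (i == enum_rank u) = false.
  by apply/negbTE; apply: contraTneq eu => ->; rewrite enum_rankK irr.
by rewrite mulN1r.
Qed.


Definition vecT {R : Type} {T : finType} (f : T -> R) : 'rV[R]_#|T| := \row_i f (enum_val i).
Definition colT {R : Type} {T : finType} (f : T -> R) : 'cV[R]_#|T| := \col_i f (enum_val i).

Lemma quadE (R : comNzRingType) (T : finType) (e : rel T) (f g : T -> R) :
  simple_graph e ->
  (vecT f *m laplacian R e *m colT g) 0 0 =
  \sum_t f t * \sum_(u | e t u) (g t - g u).
Proof.
move=> sg; rewrite -mulmxA mxE sum_ordT; apply: eq_bigr => t _.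
rewrite !mxE enum_rankK; congr (_ * _).
rewrite (eq_bigr (fun j => laplacian R e (enum_rank t) j * g (enum_val j))); last first.
  by move=> j _; rewrite !mxE.
rewrite lap_row // enum_rankK; apply: eq_bigr => u _.
by rewrite !enum_rankK.
Qed.

Lemma quad_sq (R : comNzRingType) (T : finType) (e : rel T) (f : T -> R) :
  symmetric e ->
  2%:R * \sum_t f t * \sum_(u | e t u) (f t - f u) =
  \sum_t \sum_(u | e t u) (f t - f u) ^+ 2.
Proof.
move=> sym; rewrite mulr2n mulrDl mul1r.
under eq_bigr do rewrite mulr_sumr.
rewrite {2}(@swap_sum _ _ _ _ sym) -big_split /=; apply: eq_bigr => t _.
rewrite -big_split /=; apply: eq_bigr => u _.
by rewrite expr2; ring.
Qed.

Lemma card_nbhd (T : finType) (e : rel T) (A : {set T}) (t : T) :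
  #|nbhd_in e A t| = (\sum_u ((u \in A) && e u t) : nat)%N.
Proof.
rewrite /nbhd_in -sum1_card big_mkcond /=; apply: eq_bigr => u _; rewrite inE.
by case: (_ && _).
Qed.

Lemma quad_cut (R : comNzRingType) (T : finType) (e : rel T) (S : {set T}) (a b : R) :
  symmetric e ->
  let f := fun t => if t \in S then a else b in
  \sum_t f t * \sum_(u | e t u) (f t - f u) =
  (a - b) ^+ 2 * ((\sum_(t in S) #|nbhd_in e (~: S) t|)%N)%:R.
Proof.
move=> sym f.
pose P t u : R := (e t u && (t \in S) && (u \notin S))%:R.
have H : forall t u, (if e t u then f t * (f t - f u) else 0) =
    P t u * (a * (a - b)) + P u t * (b * (b - a)).
  move=> t u; rewrite /P /f (sym u t).
  case: (e t u); case: (t \in S); case: (u \in S) => /=;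
    by rewrite ?mul0r ?mul1r ?addr0 ?add0r ?subrr ?mulr0.
rewrite (eq_bigr (fun t => \sum_u (P t u * (a * (a - b)) + P u t * (b * (b - a))))); last first.
  by move=> t _; rewrite mulr_sumr big_mkcond /=; apply: eq_bigr => u _; rewrite -H.
rewrite (eq_bigr (fun t => \sum_u P t u * (a * (a - b)) + \sum_u P u t * (b * (b - a)))); last first.
  by move=> t _; rewrite big_split.
rewrite big_split /= [X in _ + X]exchange_big /= -big_split /=.
rewrite (eq_bigr (fun t => \sum_u P t u * ((a - b) ^+ 2))); last first.
  by move=> t _; rewrite -big_split /=; apply: eq_bigr => u _; rewrite -mulrDr; congr (_ * _); ring.
rewrite (eq_bigr (fun t => (\sum_u P t u) * ((a - b) ^+ 2))); last by move=> t _; rewrite mulr_suml.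
rewrite -mulr_suml mulrC; congr (_ * _).
rewrite natr_sum (big_mkcond (fun t => t \in S)) /=; apply: eq_bigr => t _.
case: ifP => tS; last first.
  by apply: big1 => u _; rewrite /P tS andbF.
rewrite card_nbhd natr_sum; apply: eq_bigr => u _.
by rewrite /P tS inE sym andbT andbC.
Qed.

Lemma lap_sym (R : nzRingType) (T : finType) (e : rel T) i j :
  symmetric e -> laplacian R e i j = laplacian R e j i.
Proof. by move=> sym; rewrite !mxE eq_sym sym; case: eqP => // ->. Qed.

Lemma lap_one_r (R : nzRingType) (T : finType) (e : rel T) :
  simple_graph e -> laplacian R e *m (const_mx 1 : 'cV[R]_#|T|) = 0.
Proof.
move=> sg; apply/matrixP => i j; rewrite !mxE.
rewrite (eq_bigr (fun k => laplacian R e i k * (fun _ => 1) k)); last by move=> k _; rewrite [const_mx _ _ _]mxE.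
by rewrite lap_row //; apply: big1 => u _; rewrite subrr.
Qed.

Lemma lap_one_l (R : nzRingType) (T : finType) (e : rel T) :
  simple_graph e -> (const_mx 1 : 'rV[R]_#|T|) *m laplacian R e = 0.
Proof.
move=> sg; apply/matrixP => i j; rewrite !mxE.
rewrite (eq_bigr (fun k => laplacian R e j k * (fun _ => 1) k)); last first.
  by move=> k _; rewrite [const_mx _ _ _]mxE mul1r mulr1 lap_sym //; case: sg.
by rewrite lap_row //; apply: big1 => u _; rewrite subrr.
Qed.

Lemma alliance_bound (T : finType) (e : rel T) (S : {set T}) t :
  strong_def_alliance e S -> t \in S ->
  (#|nbhd_in e (~: S) t| <= (max_deg e)./2)%N.
Proof.
move=> /andP[_ /forall_inP H] tS; have := H t tS.
rewrite geq_half_double => Hle.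
have Hd : (#|nbhd_in e S t| + #|nbhd_in e (~: S) t| = deg e t)%N.
  rewrite !card_nbhd -big_split /= /deg card_ind; apply: eq_bigr => u _.
  by rewrite inE; case: (u \in S); case: (e u t).
apply: leq_trans (leq_bigmax t); rewrite -Hd -addnn leq_add2r.
exact: Hle.
Qed.

Lemma count_sorted (R : realDomainType) (s : seq R) :
  sorted <=%R s -> (count (fun y => ~~ (s`_1 <= y)%R) s <= 1)%N.
Proof.
case: s => [|a [|b t]] //=; first by move=> _; case: (~~ _).
move=> /andP[_ Hp].
have Hall : all (fun y => b <= y) t by apply: (order_path_min (@le_trans _ _)).
rewrite lexx /= add0n (@eq_in_count _ _ pred0) ?count_pred0 ?addn0 ?leq_b1 //.
by move=> y /(allP Hall) ->.
Qed.

Lemma lap_map (R1 R2 : nzRingType) (f : {rmorphism R1 -> R2}) (T : finType) (e : rel T) :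
  map_mx f (laplacian R1 e) = laplacian R2 e.
Proof.
apply/matrixP => i j; rewrite !mxE; case: ifP => _; first by rewrite rmorph_nat.
by case: ifP => _; rewrite ?rmorphN1 ?rmorph0.
Qed.

Lemma lap_herm (C : numClosedFieldType) (T : finType) (e : rel T) :
  simple_graph e -> laplacian C e \is hermsymmx.
Proof.
move=> [sym _]; apply/is_hermitianmxP; rewrite expr0 scale1r.
apply/matrixP => i j; rewrite !mxE eq_sym sym.
case: eqP => [->|_]; first by rewrite conjC_nat.
by case: ifP => _; rewrite ?rmorphN1 ?rmorph0.
Qed.

Lemma mu_ge0 (R : realType) (T : finType) (e : rel T) (s : seq R) :
  simple_graph e -> laplacian_spectrum e s -> 0 <= alg_connectivity s.
Proof.
move=> sg [Hs Hcp]; rewrite /alg_connectivity.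
move: Hs Hcp; case: s => [|a [|b t]] /=; [by move=> _ _; rewrite lexx|by move=> _ _; rewrite lexx|].
move=> /andP[ab _] Hcp; apply: le_trans ab.
have : root (char_poly (laplacian R e)) a by rewrite Hcp root_prod_XsubC mem_head.
rewrite -eigenvalue_root_char => /eigenvalueP [v Hv v0].
pose g t := v 0 (enum_rank t).
have vE : v = vecT g by apply/matrixP => i j; rewrite !mxE ord1 /g enum_valK.
have vT : v^T = colT g by apply/matrixP => i j; rewrite !mxE ord1 /g enum_valK.
have Q : (v *m laplacian R e *m v^T) 0 0 = a * (v *m v^T) 0 0.
  by rewrite Hv -scalemxAl mxE.
have Q0 : 0 <= (v *m laplacian R e *m v^T) 0 0.
  rewrite {1}vE vT quadE //.
  have := @quad_sq _ _ e g (proj1 sg) => H.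
  rewrite -(@pmulr_rge0 _ 2%:R) ?ltr0n // H.
  by apply: sumr_ge0 => t0 _; apply: sumr_ge0 => u _; exact: sqr_ge0.
have P0 : 0 < (v *m v^T) 0 0.
  rewrite lt_def; apply/andP; split; last first.
    by rewrite mxE; apply: sumr_ge0 => i _; rewrite mxE -expr2 sqr_ge0.
  apply: contra v0 => /eqP; rewrite mxE => /psumr_eq0P H.
  apply/eqP/matrixP => i j; rewrite ord1 mxE.
  have := H (fun k _ => ltac:(by rewrite mxE -expr2 sqr_ge0)) j isT; rewrite ?mxE => /eqP; rewrite mulf_eq0 orbb => /eqP.
  by [].
by move: Q0; rewrite Q pmulr_lge0.
Qed.

Lemma fiedler_cut (R : realType) (T : finType) (e : rel T) (s : seq R) (S : {set T}) :
  simple_graph e -> laplacian_spectrum e s -> 0 < alg_connectivity s ->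
  alg_connectivity s * (#|S| * (#|T| - #|S|) * #|T|)%:R <=
  (#|T| ^ 2 * \sum_(t in S) #|nbhd_in e (~: S) t|)%N%:R.
Proof.
move=> sg [Hs Hcp] mup; set n := #|T|; set k := #|S|; set mu := alg_connectivity s.
have kn : (k <= n)%N by apply: max_card.
pose a : R[i] := (n - k)%:R; pose b : R[i] := - (k%:R).
pose f (t : T) : R[i] := if t \in S then a else b.
have := @key _ _ (laplacian R[i] e) (map (real_complex R) s) (mu%:C)%C (vecT f).
have fT : (vecT f)^t* = colT f.
  by apply/matrixP => i j; rewrite !mxE /f; case: ifP => _; rewrite /a /b ?rmorphN ?conjC_nat ?rmorph_nat.
rewrite fT quadE // quad_cut; last by case: sg.
have -> : a - b = n%:R by rewrite /a /b opprK -natrD subnK.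
move=> H; have {H} := H (@lap_herm _ _ _ sg).
have cp : char_poly (laplacian R[i] e) = \prod_(y <- [seq (real_complex R) i | i <- s]) ('X - y%:P).
  by rewrite -(@lap_map _ _ (real_complex R)) -map_char_poly Hcp map_prod_XsubC big_map.
move=> /(_ cp) {cp}.
have cn : (count (fun y => ~~ (mu%:C%C <= y)%R) [seq (real_complex R) i | i <- s] <= 1)%N.
  rewrite count_map (@eq_count _ _ (fun y => ~~ (s`_1 <= y)%R)); first exact: count_sorted.
  by move=> y /=; rewrite lecR.
move=> /(_ cn) {cn}.
have mc : (0 < mu%:C%C)%R by rewrite ltcR.
move=> /(_ mc (@lap_one_r _ _ _ sg) (@lap_one_l _ _ _ sg)) {mc}.
have sumf : \sum_t f t = 0.
  rewrite (bigID (fun t => t \in S)) /=.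
  rewrite (eq_bigr (fun _ => a)); last by move=> t tS; rewrite /f tS.
  rewrite [X in _ + X](eq_bigl (fun t => t \in ~: S)); last by move=> t; rewrite inE.
  rewrite [X in _ + X](eq_bigr (fun _ => b)); last by move=> t; rewrite /f inE => /negbTE ->.
  rewrite !sumr_const -/k (_ : #|~: S| = n - k)%N; last by rewrite /n /k -(cardsC S) addKn.
  by rewrite /a /b mulNrn -!mulrnA mulnC subrr.
have x1 : vecT f *m (const_mx 1 : 'cV[R[i]]_#|T|) = 0.
  apply/matrixP => i j; rewrite !ord1 !mxE sum_ordT -[RHS]sumf; apply: eq_bigr => t _.
  by rewrite !mxE enum_rankK mulr1.
move=> /(_ x1) {x1}.
have sq : (vecT f *m colT f) 0 0 = (k * (n - k) * n)%:R.
  rewrite mxE sum_ordT.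
  rewrite (eq_bigr (fun t => f t * f t)); last by move=> t _; rewrite !mxE enum_rankK.
  rewrite (bigID (fun t => t \in S)) /=.
  rewrite (eq_bigr (fun _ => a * a)); last by move=> t tS; rewrite /f tS.
  rewrite [X in _ + X](eq_bigl (fun t => t \in ~: S)); last by move=> t; rewrite inE.
  rewrite [X in _ + X](eq_bigr (fun _ => b * b)); last by move=> t; rewrite /f inE => /negbTE ->.
  rewrite !sumr_const -/k (_ : #|~: S| = n - k)%N; last by rewrite /n /k -(cardsC S) addKn.
  rewrite /a /b mulrNN -!natrM -!mulrnA -natrD; congr (_%:R).
  have := subnK kn; move: (n - k)%N => m <-.
  ring.
rewrite sq -natrX -natrM.
rewrite -(rmorph_nat (real_complex R) (k * (n - k) * n)) -rmorphM.
by rewrite -(rmorph_nat (real_complex R)) lecR.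
Qed.

Theorem theorem2 (R : realType) (T : finType) (e : rel T) (s : seq R) :
  simple_graph e -> connected_graph e ->
  laplacian_spectrum e s ->
  let n := #|T| in
  let mu := alg_connectivity s in
  Num.ceil ((n%:R * (mu - ((max_deg e)./2)%:R)) / mu)
    <= (alliance_number e)%:Z.
Proof.
move=> sg conn Hspec /=; set n := #|T|; set mu := alg_connectivity s.
have mu0 : 0 <= mu := @mu_ge0 _ _ _ _ sg Hspec.
have nz : forall m : nat, (m%:Z)%:~R = m%:R :> R by [].
rewrite /alliance_number.
set D := (max_deg e)./2.
case: (eqVneq mu 0) => [->|mun0].
  rewrite invr0 mulr0 ceil0.
  by apply: (big_ind (fun m : nat => 0 <= m%:Z)) => // x y _ _; rewrite ler0z.
have mup : 0 < mu by rewrite lt_def mun0 mu0.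
apply: (big_ind (fun m : nat => Num.ceil (n%:R * (mu - D%:R) / mu) <= m%:Z)).
- rewrite ceil_le_int ler_pdivrMr // nz.
  by apply: ler_wpM2l; rewrite ?ler0n // gerBl ler0n.
- move=> x y Hx Hy; case: (leqP x y) => h.
    by [].
  by [].
move=> S HS.
have kpos : (0 < #|S|)%N by rewrite card_gt0; case/andP: HS.
have kn : (#|S| <= n)%N := max_card S.
have H := @fiedler_cut _ _ _ _ S sg Hspec mup.
have cut : (\sum_(t in S) #|nbhd_in e (~: S) t| <= #|S| * D)%N.
  rewrite -sum_nat_const; apply: leq_sum => t tS; exact: alliance_bound HS tS.
have H2 : mu * (#|S| * (n - #|S|) * n)%N%:R <= (n ^ 2 * (#|S| * D))%N%:R.
  by apply: le_trans H _; rewrite ler_nat leq_mul2l cut orbT.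
rewrite !natrM natrB // in H2.
rewrite ceil_le_int ler_pdivrMr // nz.
have KN : 0 < #|S|%:R * n%:R :> R.
  by rewrite mulr_gt0 // ltr0n //; apply: leq_trans kn.
have H3 : mu * (n%:R - #|S|%:R) <= n%:R * D%:R.
  rewrite -(ler_pM2l KN).
  have -> : #|S|%:R * n%:R * (mu * (n%:R - #|S|%:R)) = mu * (#|S|%:R * (n%:R - #|S|%:R) * n%:R) :> R by ring.
  have -> : #|S|%:R * n%:R * (n%:R * D%:R) = n%:R * n%:R * (#|S|%:R * D%:R) :> R by ring.
  exact: H2.
nra.
Qed.
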